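(* Let $q\in(0,1)$, $\alpha\in(-1,1)$ and $\beta<1$ real, $z\in\mathbb{C}\setminus\{0\}$ and $n\ge-1$. Then \begin{align*} p_n^{(\alpha,\beta)}(z+z^{-1};q)=\frac{1}{z^{-1}-z}\frac{(\alpha;q)_n}{(\beta;q)_n}\Big[&z^{-n-1}\,{}_2\phi_1\!\left(z\tau,z\tau^{-1};qz^2;q,\alpha\right){}_2\phi_1\!\left(z^{-1}\tau,z^{-1}\tau^{-1};qz^{-2};q,\alpha q^{n+1}\right)\\ &-z^{n+1}\,{}_2\phi_1\!\left(z^{-1}\tau,z^{-1}\tau^{-1};qz^{-2};q,\alpha\right){}_2\phi_1\!\left(z\tau,z\tau^{-1};qz^{2};q,\alpha q^{n+1}\right)\Big], \end{align*} where for $z\in\pm q^{\mathbb{Z}/2}$ the right-hand side is understood as the corresponding limit value.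
   Context: $(a;q)_n:=\prod_{j=0}^{n-1}(1-aq^j)$ for $n\in\mathbb{N}_0\cup\{\infty\}$, and for $n=-1$, $(a;q)_{-1}:=(1-aq^{-1})^{-1}$. The polynomials $p_n^{(\alpha,\beta)}(x;q)$ are defined by $p_{-1}=0$, $p_0=1$, $p_{n+1}(x)=xp_n(x)-\tilde\gamma_{n-1}\tilde\gamma_np_{n-1}(x)$ for $n\in\mathbb{N}_0$, where $\tilde\gamma_n=(1-\alpha q^n)/(1-\beta q^n)$. The $q$-Gauss series is ${}_2\phi_1(a,b;c;q,w)=\sum_{k\ge0}\frac{(a,b;q)_k}{(c,q;q)_k}w^k$. Here $\tau$ is any nonzero number with $\alpha(\tau+\tau^{-1})=\beta(z+z^{-1})$; the series depend only on this relation, since $\alpha^k(z\tau,z\tau^{-1};q)_k=\prod_{j=0}^{k-1}(\alpha(1+z^2q^{2j})-\beta q^j(1+z^2))$, and for $\alpha=0$ the terms are defined by this product expression. *)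

(* Defs.v *)
From HB Require Import structures.
From mathcomp Require Import all_boot all_order all_algebra.
From mathcomp Require Import all_classical all_reals all_analysis.
From mathcomp Require Export complex.
Import Order.TTheory GRing.Theory Num.Theory.
Import numFieldNormedType.Exports.

Set Implicit Arguments.
Unset Strict Implicit.
Unset Printing Implicit Defensive.

Local Open Scope ring_scope.
Local Open Scope classical_set_scope.

HB.instance Definition _ (R : realType) :=
  PseudoPointedMetric.copy (complex R) (complex R)^o.
HB.instance Definition _ (R : realType) :=
  NormedModule.copy (complex R) (complex R)^o.

Section Defs.
Variable R : realType.
Local Notation C := (R[i]).

Definition qpoch (a q : C) (k : nat) : C := \prod_(j < k) (1 - a * q ^+ j).

(* (a;q)_n for n : int; for n = -1 this is (1 - a q^{-1})^{-1}
   (for n <= -2 the standard extension \prod_{j=1}^{-n} (1 - a q^{-j})^{-1}). *)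
Definition qpochZ (a q : C) (n : int) : C :=
  match n with
  | Posz k => qpoch a q k
  | Negz k => \prod_(j < k.+1) (1 - a * q ^- j.+1)^-1
  end.

Definition gamt (al be q : C) (i : int) : C := (1 - al * q ^ i) / (1 - be * q ^ i).

(* pP k = (p_{k-1}(x), p_k(x)) computed by the three-term recurrence
   p_{-1} = 0, p_0 = 1, p_{k+1} = x p_k - gamt_{k-1} gamt_k p_{k-1}. *)
Fixpoint pP (al be q x : C) (k : nat) : C * C :=
  match k with
  | 0%N => (0, 1)
  | k'.+1 =>
      let pr := pP al be q x k' in
      (pr.2, x * pr.2 - gamt al be q (k'%:Z - 1) * gamt al be q k'%:Z * pr.1)
  end.

Definition pAB (al be q : C) (n : int) (x : C) : C :=
  match n with
  | Posz k => (pP al be q x k).2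
  | Negz _ => 0
  end.

(* alpha^k (z tau, z tau^{-1}; q)_k, written via the product expression
   prod_{j<k} (alpha (1 + z^2 q^{2j}) - beta q^j (1 + z^2)). *)
Definition numtau (al be q z : C) (k : nat) : C :=
  \prod_(j < k) (al * (1 + z ^+ 2 * q ^+ (2 * j)) - be * q ^+ j * (1 + z ^+ 2)).

(* k-th term of 2phi1(z tau, z tau^{-1}; q z^2; q, alpha * w):
   (z tau, z tau^{-1};q)_k / (q z^2, q; q)_k * (alpha w)^k. *)
Definition phiterm (al be q z w : C) (k : nat) : C :=
  numtau al be q z k / (qpoch (q * z ^+ 2) q k * qpoch q q k) * w ^+ k.

(* 2phi1(z tau, z tau^{-1}; q z^2; q, alpha * w) where
   alpha (tau + tau^{-1}) = beta (z + z^{-1}). *)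
Definition phitau (al be q z w : C) : C := lim (series (phiterm al be q z w) @ \oo).

Definition rhs25 (al be q : C) (n : int) (z : C) : C :=
  (z^-1 - z)^-1 * (qpochZ al q n / qpochZ be q n) *
  (z ^ (- (n + 1)) * phitau al be q z 1 * phitau al be q z^-1 (q ^ (n + 1))
   - z ^ (n + 1) * phitau al be q z^-1 1 * phitau al be q z (q ^ (n + 1))).

Definition qhalf_lattice (q z : C) : Prop := exists m : int, z ^+ 2 = q ^ m.

End Defs.

(* Main.v *)
Require Import Defs.
From HB Require Import structures.
From mathcomp Require Import all_boot all_order all_algebra.
From mathcomp Require Import all_classical all_reals all_analysis.
From mathcomp Require Import complex.
From mathcomp Require Import ring lra.
Import Order.TTheory GRing.Theory Num.Theory.
Import numFieldNormedType.Exports.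
Local Open Scope ring_scope.
Local Open Scope classical_set_scope.
Local Open Scope complex_scope.
Set Implicit Arguments.
Unset Strict Implicit.
Unset Printing Implicit Defensive.
Section CBasics.
Variable R : realType.
Local Notation C := R[i].
Local Notation nc := (@ComplexField.Normc.normc R).

Lemma ncE (x : C) : `|x| = (nc x)%:C. Proof. by []. Qed.

Lemma nc_ge0 (x : C) : 0 <= nc x.
Proof. by case: x => a b; exact: sqrtr_ge0. Qed.

Lemma ncM (x y : C) : nc (x * y) = nc x * nc y.
Proof. exact: ComplexField.Normc.normcM. Qed.

Lemma ncD (x y : C) : nc (x + y) <= nc x + nc y.
Proof. exact: le_normcD. Qed.

Lemma ncN (x : C) : nc (- x) = nc x.
Proof. exact: normcN. Qed.

Lemma ncX (x : C) n : nc (x ^+ n) = nc x ^+ n.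
Proof. by apply: complexI; rewrite rmorphXn /= -!ncE normrX. Qed.

Lemma ncR (r : R) : nc r%:C = `|r|.
Proof. by rewrite /ComplexField.Normc.normc /= expr0n /= addr0 sqrtr_sqr. Qed.

Lemma nc_sum (I : Type) (r : seq I) (P : pred I) (F : I -> C) :
  nc (\sum_(i <- r | P i) F i) <= \sum_(i <- r | P i) nc (F i).
Proof. by rewrite -lecR rmorph_sum /=; exact: (@ler_norm_sum _ C _ r F P). Qed.

Lemma ncB (x y : C) : nc x - nc y <= nc (x - y).
Proof. have := ncD (x - y) y; rewrite subrK; lra. Qed.

Lemma nc_eq0 (x : C) : (nc x == 0) = (x == 0).
Proof.
apply/eqP/eqP; first exact: ComplexField.Normc.eq0_normc.
by move=> ->; exact: ComplexField.Normc.normc0.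
Qed.

Lemma Re_le_nc (x : C) : `|complex.Re x| <= nc x.
Proof.
case: x => a b /=; rewrite -sqrtr_sqr ler_sqrt ?addr_ge0 ?sqr_ge0 //.
by rewrite lerDl sqr_ge0.
Qed.

Lemma Im_le_nc (x : C) : `|complex.Im x| <= nc x.
Proof.
case: x => a b /=; rewrite -sqrtr_sqr ler_sqrt ?addr_ge0 ?sqr_ge0 //.
by rewrite lerDr sqr_ge0.
Qed.

Lemma cvgC (u : nat -> C) (l : C) :
  (forall e : R, 0 < e -> \forall n \near \oo, nc (l - u n) < e) -> u @ \oo --> l.
Proof.
move=> H; apply/cvgrPdist_lt => e e0.
have [eI eR] : complex.Im e = 0 /\ 0 < complex.Re e.
  by move: e0; rewrite ltcE /= => /andP[/eqP -> ->].
have -> : e = (complex.Re e)%:C by case: e e0 eI eR => a b /= _ -> _.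
by apply: filterS (H _ eR) => n; rewrite ncE ltcR.
Qed.

Lemma cvgCP (u : nat -> C) (l : C) : u @ \oo --> l ->
  (forall e : R, 0 < e -> \forall n \near \oo, nc (l - u n) < e).
Proof.
move=> /cvgrPdist_lt H e e0.
by apply: filterS (H e%:C _) => [n h|]; [rewrite -ltcR | rewrite ltcR].
Qed.

End CBasics.

Section Abs.
Variable R : realType.
Local Notation C := R[i].
Local Notation nc := (@ComplexField.Normc.normc R).

Lemma series0 (V : zmodType) (u : nat -> V) : series u 0 = 0.
Proof. by rewrite /series /= big_geq. Qed.

Lemma nc_cplx (x y : R) : nc (x +i* y) <= `|x| + `|y|.
Proof.
have -> : x +i* y = x%:C + y%:C * 'i by simpc.
have h := ncD (x%:C) (y%:C * 'i).
apply: le_trans h _; rewrite ncM !ncR.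
have -> : nc 'i = 1 by rewrite /ComplexField.Normc.normc /= expr0n expr1n /= add0r sqrtr1.
by rewrite mulr1.
Qed.

Lemma real_cvg_geom (a : nat -> R) (M r : R) : 0 <= r < 1 ->
  (forall k, `|a k| <= M * r ^+ k) -> cvgn (series a).
Proof.
move=> /andP[r0 r1] H.
have M0 : 0 <= M by have := H 0%N; rewrite expr0 mulr1; exact: le_trans (normr_ge0 _).
apply: (@normed_cvg _ R) => /=.
apply: (@series_le_cvg _ _ (geometric M r)).
- by move=> n /=.
- by move=> n; rewrite /geometric /= mulr_ge0 ?exprn_ge0.
- by move=> n; rewrite /geometric /=; exact: H.
- by apply: is_cvg_geometric_series; rewrite ger0_norm.
Qed.

Lemma cvg_geomC (u : nat -> C) (M r : R) : 0 <= r < 1 ->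
  (forall k, nc (u k) <= M * r ^+ k) -> cvgn (series u).
Proof.
move=> r01 H.
pose a k := complex.Re (u k); pose b k := complex.Im (u k).
have ca : cvgn (series a).
  by apply: (real_cvg_geom r01) => k; apply: le_trans (H k); exact: Re_le_nc.
have cb : cvgn (series b).
  by apply: (real_cvg_geom r01) => k; apply: le_trans (H k); exact: Im_le_nc.
have Su : forall n, series u n = series a n +i* series b n.
  elim=> [|n IH]; first by rewrite !series0.
  by rewrite !seriesSr IH /a /b; case: (u n) => x y.
apply/cvg_ex; exists (limn (series a) +i* limn (series b)).
apply: cvgC => e e0.
have e2 : 0 < e / 2 by rewrite divr_gt0.
have := (cvgrPdist_lt _ _).1 ca (e / 2) e2.
have := (cvgrPdist_lt _ _).1 cb (e / 2) e2.
move=> hb ha; near=> n.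
have h1 : `|limn (series a) - series a n| < e / 2 by near: n; exact: ha.
have h2 : `|limn (series b) - series b n| < e / 2 by near: n; exact: hb.
rewrite Su.
have -> : limn (series a) +i* limn (series b) - (series a n +i* series b n) =
  (limn (series a) - series a n) +i* (limn (series b) - series b n) by simpc.
apply: le_lt_trans (nc_cplx _ _) _.
lra.
Unshelve. all: by end_near.
Qed.

End Abs.

Section LimB.
Variable R : realType.
Local Notation C := R[i].
Local Notation nc := (@ComplexField.Normc.normc R).

Lemma lim_bound (u : nat -> C) (l c : C) (r : R) : u @ \oo --> l ->
  (forall n, (0 < n)%N -> nc (u n - c) <= r) -> nc (l - c) <= r.
Proof.
move=> ul H; rewrite leNgt; apply/negP => lt.
have e0 : 0 < nc (l - c) - r by rewrite subr_gt0.
have [N _ HN] := cvgCP ul e0.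
have h1 := HN N.+1 (leqnSn _).
have h2 := H N.+1 isT.
have h3 := ncD (l - u N.+1) (u N.+1 - c).
rewrite addrA subrK in h3.
simpl in h1. lra.
Qed.

End LimB.

Section Coef.
Variable R : realType.
Local Notation C := R[i].
Local Notation nc := (@ComplexField.Normc.normc R).
Variables (q al be : R).
Local Notation Q := (q%:C).
Local Notation A := (al%:C).
Local Notation B := (be%:C).

Definition cf (z : C) k := numtau A B Q z k / (qpoch (Q * z ^+ 2) Q k * qpoch Q Q k).
Definition dd (z : C) k := A * (1 + z ^+ 2 * Q ^+ (2 * k)) - B * Q ^+ k * (1 + z ^+ 2).

Lemma phitermE z w k : phiterm A B Q z w k = cf z k * w ^+ k.
Proof. by []. Qed.

Lemma cf0 z : cf z 0 = 1.
Proof. by rewrite /cf /numtau /qpoch !big_ord0 mulr1 divr1. Qed.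

Lemma cf_rec z k : 1 - Q * z ^+ 2 * Q ^+ k != 0 -> 1 - Q * Q ^+ k != 0 ->
  cf z k.+1 * ((1 - Q * z ^+ 2 * Q ^+ k) * (1 - Q * Q ^+ k)) = cf z k * dd z k.
Proof.
move=> h1 h2.
rewrite /cf /numtau /qpoch !big_ord_recr /= /dd.
set N := \prod_(i < k) _; set D1 := \prod_(i < k) _; set D2 := \prod_(i < k) _.
rewrite !invfM.
set f1 := 1 - _; set f2 := 1 - _.
rewrite -/f1 -/f2 in h1 h2.
have e1 : f1^-1 * f1 = 1 by rewrite mulVf.
have e2 : f2^-1 * f2 = 1 by rewrite mulVf.
transitivity (N * (A * (1 + z ^+ 2 * Q ^+ (2 * k)) - B * Q ^+ k * (1 + z ^+ 2)) * (D1^-1 * D2^-1) * (f1^-1 * f1) * (f2^-1 * f2)); first by ring.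
by rewrite e1 e2; ring.
Qed.


Lemma ncBD (x y : C) : nc (x - y) <= nc x + nc y.
Proof. by apply: le_trans (ncD _ _) _; rewrite ncN. Qed.

Lemma nc1 : nc 1 = 1 :> R.
Proof. exact: ComplexField.Normc.normc1. Qed.

Lemma ncQk k : 0 <= q -> nc (Q ^+ k) = q ^+ k.
Proof. by move=> q0; rewrite ncX ncR ger0_norm. Qed.

Lemma dd_bound z k : 0 <= q <= 1 ->
  nc (dd z k) <= `|al| + q ^+ k * (`|al| * nc z ^+ 2 + `|be| * (1 + nc z ^+ 2)).
Proof.
move=> /andP[q0 q1].
have t0 : 0 <= q ^+ k by rewrite exprn_ge0.
have t1 : q ^+ k <= 1 by rewrite exprn_ile1.
have t2 : q ^+ (2 * k) <= q ^+ k.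
  by rewrite mulnC exprM expr2 ler_piMr ?exprn_ge0.
have t20 : 0 <= q ^+ (2 * k) by rewrite exprn_ge0.
have nz0 : 0 <= nc z ^+ 2 by rewrite exprn_ge0 ?nc_ge0.
apply: le_trans (ncBD _ _) _.
rewrite !ncM !ncR ncQk //.
have hX : nc (1 + z ^+ 2 * Q ^+ (2 * k)) <= 1 + nc z ^+ 2 * q ^+ (2 * k).
  by apply: le_trans (ncD _ _) _; rewrite nc1 ncM !ncX ncR ger0_norm.
have hY : nc (1 + z ^+ 2) <= 1 + nc z ^+ 2.
  by apply: le_trans (ncD _ _) _; rewrite nc1 ncX.
have a0 : 0 <= `|al| by [].
have b0 : 0 <= `|be| by [].
have e1 := ler_wpM2l a0 hX.
have e2 := ler_wpM2l (mulr_ge0 b0 t0) hY.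
have e3 := ler_wpM2l (mulr_ge0 a0 nz0) t2.
nra.
Qed.

Lemma f1_bound z k : 0 <= q <= 1 ->
  1 - nc z ^+ 2 * q ^+ k <= nc (1 - Q * z ^+ 2 * Q ^+ k).
Proof.
move=> /andP[q0 q1].
apply: le_trans (ncB _ _); rewrite nc1 !ncM !ncX !ncR ger0_norm //.
have nz0 : 0 <= nc z ^+ 2 by rewrite exprn_ge0 ?nc_ge0.
have t0 : 0 <= q ^+ k by rewrite exprn_ge0.
have := ler_wpM2r (mulr_ge0 nz0 t0) q1. nra.
Qed.

Lemma f2_bound k : 0 <= q <= 1 -> 1 - q ^+ k <= nc (1 - Q * Q ^+ k).
Proof.
move=> /andP[q0 q1].
apply: le_trans (ncB _ _); rewrite nc1 !ncM !ncX !ncR ger0_norm //.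
have t0 : 0 <= q ^+ k by rewrite exprn_ge0.
have := ler_wpM2r t0 q1. nra.
Qed.

Lemma f2_neq0 k : 0 <= q < 1 -> 1 - Q * Q ^+ k != 0.
Proof.
move=> /andP[q0 q1].
rewrite -nc_eq0 gt_eqF //; apply: lt_le_trans (ncB _ _).
rewrite nc1 !ncM !ncX !ncR ger0_norm //.
have t1 : q ^+ k <= 1 by rewrite exprn_ile1 // ltW.
have t0 : 0 <= q ^+ k by rewrite exprn_ge0.
nra.
Qed.

Lemma cf_bound z : 0 < q < 1 -> `|al| < 1 ->
  (forall k, 1 - Q * z ^+ 2 * Q ^+ k != 0) ->
  exists M r : R, (0 <= r < 1) /\ forall k, nc (cf z k) <= M * r ^+ k.
Proof.
move=> /andP[q0 q1] al1 Hz.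
have q01 : 0 <= q <= 1 by rewrite !ltW.
have q01' : 0 <= q < 1 by rewrite ltW.
set rho := (1 + `|al|) / 2.
set nz := nc z ^+ 2.
set Aa := `|al| * nz + `|be| * (1 + nz).
set D := Aa + nz + 2.
have nz0 : 0 <= nz by rewrite exprn_ge0 ?nc_ge0.
have a0 : 0 <= `|al| by [].
have b0 : 0 <= `|be| by [].
have Aa0 : 0 <= Aa by rewrite /Aa; nra.
have D0 : 0 < D by rewrite /D; lra.
set del := (rho - `|al|) / D.
have del0 : 0 < del by rewrite divr_gt0 // /rho; lra.
have [K _ HK] : \forall n \near \oo, `|0 - q ^+ n| < del.
  by apply: (cvgrPdist_lt _ _).1 (cvg_expr _) _ del0; rewrite ger0_norm // ltW.
have step : forall k, (K <= k)%N -> nc (cf z k.+1) <= rho * nc (cf z k).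
  move=> k Kk.
  have tk : q ^+ k < del.
    by have := HK k Kk; rewrite sub0r normrN ger0_norm // exprn_ge0 // ltW.
  have hd := dd_bound z k q01.
  have h1 := f1_bound z k q01.
  have h2 := f2_bound k q01.
  have hrec := cf_rec (Hz k) (f2_neq0 k q01').
  have E : nc (cf z k.+1) * (nc (1 - Q * z ^+ 2 * Q ^+ k) * nc (1 - Q * Q ^+ k))
     = nc (cf z k) * nc (dd z k) by rewrite -!ncM hrec.
  move: tk hd h1 h2 E; rewrite -/nz -/Aa.
  set t := q ^+ k.
  have t0 : 0 <= t by rewrite exprn_ge0 // ltW.
  move=> tk hd h1 h2 E.
  have tD : t * D < rho - `|al| by rewrite -ltr_pdivlMr.
  have c0 := nc_ge0 (cf z k).
  have c1 := nc_ge0 (cf z k.+1).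
  set f1 := nc _ in h1 E; set f2 := nc _ in h2 E.
  set dk := nc (dd z k) in hd E.
  have tAa : 0 <= t * Aa by rewrite mulr_ge0.
  have tnz : 0 <= t * nz by rewrite mulr_ge0.
  have tD' : t * Aa + t * nz + 2 * t < (1 - `|al|) / 2.
    by move: tD; rewrite /D /rho; nra.
  have l1 : 0 <= 1 - nz * t by nra.
  have l2 : 0 <= 1 - t by nra.
  have P1 : (1 - nz * t) * (1 - t) <= f1 * f2.
    have e1 := ler_wpM2r l2 h1.
    have e2 := ler_wpM2l (nc_ge0 (1 - Q * z ^+ 2 * Q ^+ k)) h2.
    exact: le_trans e1 e2.
  have P2 : 1 - t * (nz + 1) <= (1 - nz * t) * (1 - t) by nra.
  have P3 : dk <= rho * (1 - t * (nz + 1)).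
    by apply: le_trans hd _; rewrite /rho; nra.
  have Ppos : 0 < f1 * f2 by nra.
  have rho0' : 0 <= rho by rewrite /rho; lra.
  have dkP : dk <= rho * (f1 * f2).
    by apply: le_trans P3 _; apply: ler_wpM2l => //; exact: le_trans P2 P1.
  rewrite -(ler_pM2r Ppos) E -mulrA mulrCA.
  by apply: ler_wpM2l.
set M := \sum_(i < K.+1) nc (cf z i) / rho ^+ i.
have rho0 : 0 < rho by rewrite /rho; lra.
exists M, rho; split; first by apply/andP; split; rewrite /rho; lra.
have low : forall k, (k <= K)%N -> nc (cf z k) <= M * rho ^+ k.
  move=> k kK.
  have -> : nc (cf z k) = nc (cf z k) / rho ^+ k * rho ^+ k.
    by rewrite divfK // expf_neq0 // gt_eqF.
  apply: ler_wpM2r; first by rewrite exprn_ge0 // ltW.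
  have kK' : (k < K.+1)%N by [].
  rewrite /M (bigD1 (Ordinal kK')) //= lerDl sumr_ge0 // => i _.
  by rewrite divr_ge0 ?nc_ge0 // exprn_ge0 // ltW.
have high : forall j, nc (cf z (K + j)) <= M * rho ^+ (K + j).
  elim=> [|j IH]; first by rewrite addn0 low.
  rewrite addnS; apply: le_trans (step _ (leq_addr _ _)) _.
  rewrite exprS mulrCA; apply: ler_wpM2l => //; exact: ltW.
move=> k; case: (leqP k K) => [kK|/ltnW Kk]; first exact: low.
by rewrite -(subnKC Kk); exact: high.
Qed.

End Coef.

Section Phi.
Variable R : realType.
Local Notation C := R[i].
Local Notation nc := (@ComplexField.Normc.normc R).
Variables (q al be : R).
Local Notation Q := (q%:C).
Local Notation A := (al%:C).
Local Notation B := (be%:C).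

Definition zok (z : C) := forall k, 1 - Q * z ^+ 2 * Q ^+ k != 0.

Lemma geo_sum_le (r : R) N : 0 <= r < 1 -> \sum_(i < N) r ^+ i <= (1 - r)^-1.
Proof.
move=> /andP[r0 r1].
have e : forall N, (\sum_(i < N) r ^+ i) * (1 - r) = 1 - r ^+ N.
  elim=> [|n IH]; first by rewrite big_ord0 expr0 mul0r subrr.
  by rewrite big_ord_recr /= mulrDl IH exprS; ring.
rewrite -(ler_pM2r (_ : 0 < 1 - r)); last by rewrite subr_gt0.
rewrite e mulVf; last by rewrite subr_eq0 eq_sym lt_eqF.
by rewrite lerBlDr lerDl exprn_ge0.
Qed.

Lemma phi_cvg z r : 0 < q < 1 -> `|al| < 1 -> zok z -> 0 <= r <= 1 ->
  series (phiterm A B Q z r%:C) @ \oo --> phitau A B Q z r%:C.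
Proof.
move=> hq hal hz /andP[r0 r1].
have [M [rho [hrho HM]]] := cf_bound be hq hal hz.
have : cvgn (series (phiterm A B Q z r%:C)).
  apply: (cvg_geomC hrho) => k.
  rewrite phitermE ncM ncX ncR ger0_norm //.
  rewrite -[X in _ <= X]mulr1; apply: ler_pM => //; first exact: nc_ge0.
  by rewrite exprn_ge0. by rewrite exprn_ile1.
by [].
Qed.

Lemma phi_near1 z : 0 < q < 1 -> `|al| < 1 -> zok z ->
  exists K : R, forall r, 0 <= r <= 1 -> nc (phitau A B Q z r%:C - 1) <= r * K.
Proof.
move=> hq hal hz.
have [M [rho [/andP[rho0 rho1] HM]]] := cf_bound be hq hal hz.
have M0 : 0 <= M by have := HM 0%N; rewrite expr0 mulr1; exact: le_trans (nc_ge0 _).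
exists (M * (1 - rho)^-1) => r hr.
have /andP[r0 r1] := hr.
apply: (lim_bound (phi_cvg hq hal hz hr)) => -[//|N] _.
rewrite seriesEord /= big_ord_recl /= phitermE cf0 expr0 mulr1 addrAC subrr add0r.
apply: le_trans (nc_sum _ _ _) _.
apply: le_trans (_ : \sum_(i < N) r * M * rho ^+ i <= _).
  apply: ler_sum => i _.
  have -> : bump 0 i = i.+1 by rewrite /bump leq0n add1n.
  rewrite phitermE ncM ncX ncR ger0_norm //.
  apply: le_trans (ler_wpM2r (exprn_ge0 _ r0) (HM _)) _.
  have h1 : r ^+ i.+1 <= r by rewrite exprS ler_piMr // exprn_ile1.
  have h2 : rho ^+ i.+1 <= rho ^+ i by rewrite exprS ler_piMl ?exprn_ge0 // ltW.
  have h3 : 0 <= rho ^+ i by rewrite exprn_ge0.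
  have h4 : 0 <= r ^+ i.+1 by rewrite exprn_ge0.
  have h5 := ler_wpM2l M0 h2.
  have h6 := ler_wpM2r (mulr_ge0 M0 h3) h1.
  nra.
have -> : \sum_(i < N) r * M * rho ^+ i = r * M * \sum_(i < N) rho ^+ i.
  by rewrite big_distrr.
rewrite -mulrA; apply: ler_wpM2l => //.
apply: ler_wpM2l => //.
by apply: geo_sum_le; rewrite rho0.
Qed.

Lemma phi_to1 z : 0 < q < 1 -> `|al| < 1 -> zok z ->
  (fun m => phitau A B Q z (Q ^+ m)) @ \oo --> (1 : C).
Proof.
move=> hq hal hz.
have [K HK] := phi_near1 hq hal hz.
have /andP[q0 q1] := hq.
apply: cvgC => e e0.
have e1 : 0 < e / (`|K| + 1) by rewrite divr_gt0 // ltr_wpDl.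
have [N _ HN] : \forall n \near \oo, `|0 - q ^+ n| < e / (`|K| + 1).
  by apply: (cvgrPdist_lt _ _).1 (cvg_expr _) _ e1; rewrite ger0_norm // ltW.
exists N => // m /= Nm.
have := HN m Nm; rewrite sub0r normrN ger0_norm ?exprn_ge0 ?ltW // => hm.
have hr : 0 <= q ^+ m <= 1 by apply/andP; split; [rewrite exprn_ge0 // ltW | rewrite exprn_ile1 // ltW].
rewrite -rmorphXn /= -ncN opprB.
apply: le_lt_trans (HK _ hr) _.
rewrite ltr_pdivlMr ?ltr_wpDl // in hm.
have t0 : 0 <= q ^+ m by rewrite exprn_ge0 // ltW.
have := ler_wpM2l t0 (ler_norm K).
nra.
Qed.

End Phi.

Section Feq.
Variable R : realType.
Local Notation C := R[i].
Local Notation nc := (@ComplexField.Normc.normc R).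
Variables (q al be : R).
Local Notation Q := (q%:C).
Local Notation A := (al%:C).
Local Notation B := (be%:C).

Lemma brk z x N : z != 0 -> 0 <= q < 1 -> zok q z ->
  z * cf q al be z N.+1 * (Q ^+ 2 * x) ^+ N.+1 + z^-1 * cf q al be z N.+1 * x ^+ N.+1
  - (z + z^-1) * cf q al be z N.+1 * (Q * x) ^+ N.+1 =
  x * (A * (z * cf q al be z N * (Q ^+ 2 * x) ^+ N + z^-1 * cf q al be z N * x ^+ N)
       - B * (z + z^-1) * cf q al be z N * (Q * x) ^+ N).
Proof.
move=> z0 hq hz.
have f1 := hz N; have f2 := f2_neq0 N hq.
have rec := @cf_rec R q al be z N f1 f2.
rewrite /dd in rec.
move: f1 f2 rec.
rewrite !exprMn ![_ ^+ N.+1]exprS mul2n -addnn exprD.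
set t := Q ^+ N; set s := x ^+ N; set c0 := cf q al be z N; set c1 := cf q al be z N.+1.
move=> f1 f2 rec.
have c1E : c1 = c0 * (A * (1 + z ^+ 2 * (t * t)) - B * t * (1 + z ^+ 2)) /
   ((1 - Q * z ^+ 2 * t) * (1 - Q * t)).
  by rewrite -rec mulfK // mulf_neq0.
rewrite c1E.
field.
by rewrite f1 f2 z0.
Qed.


Definition SS z y N := series (phiterm A B Q z y) N.
Definition FF z x N := z * SS z (Q ^+ 2 * x) N + z^-1 * SS z x N - (z + z^-1) * SS z (Q * x) N.
Definition GG z x N := x * (A * (z * SS z (Q ^+ 2 * x) N + z^-1 * SS z x N)
       - B * (z + z^-1) * SS z (Q * x) N).

Lemma psum z x N : z != 0 -> 0 <= q < 1 -> zok q z -> FF z x N.+1 = GG z x N.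
Proof.
move=> z0 hq hz.
elim: N => [|N IH].
  rewrite /FF /GG /SS !seriesSr !series0 !add0r !phitermE !cf0 !expr0 !mulr1.
  by ring.
have eF : FF z x N.+2 = FF z x N.+1 +
  (z * cf q al be z N.+1 * (Q ^+ 2 * x) ^+ N.+1 + z^-1 * cf q al be z N.+1 * x ^+ N.+1
  - (z + z^-1) * cf q al be z N.+1 * (Q * x) ^+ N.+1).
  by rewrite /FF /SS !(seriesSr _ N.+1) !phitermE; ring.
have eG : GG z x N.+1 = GG z x N +
  x * (A * (z * cf q al be z N * (Q ^+ 2 * x) ^+ N + z^-1 * cf q al be z N * x ^+ N)
       - B * (z + z^-1) * cf q al be z N * (Q * x) ^+ N).
  by rewrite /GG /SS !(seriesSr _ N) !phitermE; ring.
by rewrite eF eG IH brk.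
Qed.


Lemma cvg_lin3 (u v w : nat -> C) (a b c la lb lc : C) :
  u @ \oo --> la -> v @ \oo --> lb -> w @ \oo --> lc ->
  (fun n => a * u n + b * v n - c * w n) @ \oo --> a * la + b * lb - c * lc.
Proof.
move=> hu hv hw.
have ha : (fun n => a * u n) @ \oo --> a * la.
  exact: (@cvgM _ _ _ _ (fun=> a) u a la (cvg_cst _) hu).
have hb : (fun n => b * v n) @ \oo --> b * lb.
  exact: (@cvgM _ _ _ _ (fun=> b) v b lb (cvg_cst _) hv).
have hc : (fun n => c * w n) @ \oo --> c * lc.
  exact: (@cvgM _ _ _ _ (fun=> c) w c lc (cvg_cst _) hw).
exact: (cvgB (cvgD ha hb) hc).
Qed.

Lemma shift1 (u : nat -> C) (l : C) : u @ \oo --> l -> (fun n => u n.+1) @ \oo --> l.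
Proof. by move=> h; rewrite (cvg_shiftS u (nbhs l)). Qed.

Lemma uniqC (u : nat -> C) (l1 l2 : C) : u @ \oo --> l1 -> u @ \oo --> l2 -> l1 = l2.
Proof. move=> h1 h2. exact: (cvg_unique (@norm_hausdorff _ C) h1 h2). Qed.

Lemma SS_cvg z r : 0 < q < 1 -> `|al| < 1 -> zok q z -> 0 <= r <= 1 ->
  SS z r%:C n @[n --> \oo] --> phitau A B Q z r%:C.
Proof. by move=> *; apply: phi_cvg. Qed.

Lemma feq z r : z != 0 -> 0 < q < 1 -> `|al| < 1 -> zok q z -> 0 <= r <= 1 ->
  (1 - A * r%:C) * (z * phitau A B Q z (Q ^+ 2 * r%:C) + z^-1 * phitau A B Q z r%:C)
  = (1 - B * r%:C) * (z + z^-1) * phitau A B Q z (Q * r%:C).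
Proof.
move=> z0 hq hal hz /andP[r0 r1].
have /andP[q0 q1] := hq.
have hq' : 0 <= q < 1 by rewrite ltW.
set x := r%:C.
have eq1 : Q * x = (q * r)%:C by rewrite rmorphM.
have eq2 : Q ^+ 2 * x = (q ^+ 2 * r)%:C by rewrite rmorphM rmorphXn.
have hr0 : 0 <= r <= 1 by rewrite r0 r1.
have hr1 : 0 <= q * r <= 1.
  by apply/andP; split; [rewrite mulr_ge0 // ltW | rewrite mulr_ile1 // ltW].
have hr2 : 0 <= q ^+ 2 * r <= 1.
  apply/andP; split; first by rewrite mulr_ge0 // exprn_ge0 // ltW.
  by rewrite mulr_ile1 // ?exprn_ge0 ?exprn_ile1 // ltW.
have c0 := SS_cvg hq hal hz hr0.
have c1 := SS_cvg hq hal hz hr1. rewrite -eq1 in c1.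
have c2 := SS_cvg hq hal hz hr2. rewrite -eq2 in c2.
set P0 := phitau A B Q z x in c0 *; set P1 := phitau A B Q z (Q * x) in c1 *;
set P2 := phitau A B Q z (Q ^+ 2 * x) in c2 *.
have hF : (fun n => FF z x n) @ \oo --> z * P2 + z^-1 * P0 - (z + z^-1) * P1.
  exact: (cvg_lin3 (a:=z) (b:=z^-1) (c:=z + z^-1) c2 c0 c1).
have hG : (fun n => FF z x n.+1) @ \oo -->
    (x * A * z) * P2 + (x * A * z^-1) * P0 - (x * B * (z + z^-1)) * P1.
  have -> : (fun n => FF z x n.+1) = (fun n => (x * A * z) * SS z (Q ^+ 2 * x) n
     + (x * A * z^-1) * SS z r%:C n - (x * B * (z + z^-1)) * SS z (Q * x) n).
    by apply: funext => n; rewrite psum // /GG; ring.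
  exact: (cvg_lin3 c2 c0 c1).
have hF' : (fun n => FF z x n.+1) @ \oo --> z * P2 + z^-1 * P0 - (z + z^-1) * P1.
  exact: (shift1 hF).
have E := uniqC hF' hG.
apply/eqP; rewrite -subr_eq0; apply/eqP.
transitivity (z * P2 + z^-1 * P0 - (z + z^-1) * P1 -
    ((x * A * z) * P2 + (x * A * z^-1) * P0 - (x * B * (z + z^-1)) * P1)); first by ring.
by rewrite E subrr.
Qed.

End Feq.

Section Main.
Variable R : realType.
Local Notation C := R[i].
Local Notation nc := (@ComplexField.Normc.normc R).
Variables (q al be : R).
Local Notation Q := (q%:C).
Local Notation A := (al%:C).
Local Notation B := (be%:C).

Definition Pz (w : C) m := phitau A B Q w (Q ^+ m).

Lemma feqm w m : w != 0 -> 0 < q < 1 -> `|al| < 1 -> zok q w ->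
  (1 - A * Q ^+ m) * (w * Pz w m.+2 + w^-1 * Pz w m) =
  (1 - B * Q ^+ m) * (w + w^-1) * Pz w m.+1.
Proof.
move=> w0 hq hal hw.
have /andP[q0 q1] := hq.
have hr : 0 <= q ^+ m <= 1.
  by apply/andP; split; [rewrite exprn_ge0 // ltW | rewrite exprn_ile1 // ltW].
have := @feq R q al be w (q ^+ m) w0 hq hal hw hr.
by rewrite rmorphXn /= -exprD -exprS add2n.
Qed.

Lemma sol w m : w != 0 -> 0 < q < 1 -> `|al| < 1 -> zok q w ->
  (1 - A * Q ^+ m) * (w ^+ m.+2 * Pz w m.+2 + w ^+ m * Pz w m) =
  (1 - B * Q ^+ m) * (w + w^-1) * (w ^+ m.+1 * Pz w m.+1).
Proof.
move=> w0 hq hal hw.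
have E := feqm m w0 hq hal hw.
transitivity (w ^+ m.+1 * ((1 - A * Q ^+ m) * (w * Pz w m.+2 + w^-1 * Pz w m))).
  by rewrite !exprS; field.
by rewrite E !exprS; ring.
Qed.


Definition WW (z : C) m := z^-1 * Pz z m * Pz z^-1 m.+1 - z * Pz z m.+1 * Pz z^-1 m.

Lemma h_neq0 m : 0 <= q < 1 -> `|al| < 1 -> 1 - A * Q ^+ m != 0.
Proof.
move=> /andP[q0 q1] hal.
rewrite -nc_eq0 gt_eqF //; apply: lt_le_trans (ncB _ _).
rewrite nc1 !ncM !ncX !ncR (ger0_norm q0).
have t1 : q ^+ m <= 1 by rewrite exprn_ile1 // ltW.
have t0 : 0 <= q ^+ m by rewrite exprn_ge0.
have a0 : 0 <= `|al| by [].
have := ler_wpM2l a0 t1. nra.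
Qed.

Lemma WW_step z m : z != 0 -> 0 < q < 1 -> `|al| < 1 -> zok q z -> zok q z^-1 ->
  WW z m.+1 = WW z m.
Proof.
move=> z0 hq hal hz hz'.
have hq' : 0 <= q < 1 by case/andP: hq => q0 q1; rewrite ltW.
have E1 := feqm m z0 hq hal hz.
have z0' : z^-1 != 0 by rewrite invr_eq0.
have E2 := feqm m z0' hq hal hz'.
rewrite invrK in E2.
have hm := h_neq0 m hq' hal.
apply: (mulfI hm); apply/eqP; rewrite -subr_eq0; apply/eqP.
transitivity (Pz z m.+1 * ((1 - A * Q ^+ m) * (z^-1 * Pz z^-1 m.+2 + z * Pz z^-1 m)
   - (1 - B * Q ^+ m) * (z^-1 + z) * Pz z^-1 m.+1)
  - Pz z^-1 m.+1 * ((1 - A * Q ^+ m) * (z * Pz z m.+2 + z^-1 * Pz z m)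
   - (1 - B * Q ^+ m) * (z + z^-1) * Pz z m.+1)).
  rewrite /WW; move: (Pz z m) (Pz z m.+1) (Pz z m.+2) (Pz z^-1 m) (Pz z^-1 m.+1) (Pz z^-1 m.+2).
  by move=> a b c d e f; ring.
by rewrite E1 E2 !subrr; ring.
Qed.


Lemma cvg_W (u1 u2 v1 v2 : nat -> C) (a b l1 l2 k1 k2 : C) :
  u1 @ \oo --> l1 -> u2 @ \oo --> l2 -> v1 @ \oo --> k1 -> v2 @ \oo --> k2 ->
  (fun n => a * u1 n * v1 n - b * u2 n * v2 n) @ \oo --> a * l1 * k1 - b * l2 * k2.
Proof.
move=> h1 h2 h3 h4.
have ha : (fun n => a * u1 n) @ \oo --> a * l1.
  exact: (@cvgM _ _ _ _ (fun=> a) u1 a l1 (cvg_cst _) h1).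
have hb : (fun n => b * u2 n) @ \oo --> b * l2.
  exact: (@cvgM _ _ _ _ (fun=> b) u2 b l2 (cvg_cst _) h2).
have hc : (fun n => a * u1 n * v1 n) @ \oo --> a * l1 * k1.
  exact: (@cvgM _ _ _ _ (fun n => a * u1 n) v1 _ _ ha h3).
have hd : (fun n => b * u2 n * v2 n) @ \oo --> b * l2 * k2.
  exact: (@cvgM _ _ _ _ (fun n => b * u2 n) v2 _ _ hb h4).
exact: (cvgB hc hd).
Qed.

Lemma WW0 z : z != 0 -> 0 < q < 1 -> `|al| < 1 -> zok q z -> zok q z^-1 ->
  WW z 0 = z^-1 - z.
Proof.
move=> z0 hq hal hz hz'.
have Wc : forall m, WW z m = WW z 0.
  by elim=> [//|m IH]; rewrite WW_step.
have hP : (fun m => Pz z m) @ \oo --> (1 : C) by exact: phi_to1.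
have hQ : (fun m => Pz z^-1 m) @ \oo --> (1 : C) by exact: phi_to1.
have hL := cvg_W (a := z^-1) (b := z) hP (shift1 hP) (shift1 hQ) hQ.
rewrite !mulr1 in hL.
have hC : (fun m => WW z m) @ \oo --> WW z 0.
  have -> : (fun m => WW z m) = (fun=> WW z 0) by apply: funext => m; exact: Wc.
  exact: cvg_cst.
exact: (uniqC hC hL).
Qed.

Definition RR (z : C) m :=
  (Pz z 0 * (z^-1 ^+ m * Pz z^-1 m) - Pz z^-1 0 * (z ^+ m * Pz z m)) / (z^-1 - z).

Lemma RR0 z : RR z 0 = 0.
Proof.
rewrite /RR !expr0; move: (Pz z 0) (Pz z^-1 0) => a b.
by rewrite !mul1r [a * b]mulrC subrr mul0r.
Qed.

Lemma RR1 z : z != 0 -> 0 < q < 1 -> `|al| < 1 -> zok q z -> zok q z^-1 ->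
  z^-1 - z != 0 -> RR z 1 = 1.
Proof.
move=> z0 hq hal hz hz' hzz.
have W := WW0 z0 hq hal hz hz'.
rewrite /WW in W.
rewrite /RR !expr1.
have -> : Pz z 0 * (z^-1 * Pz z^-1 1) - Pz z^-1 0 * (z * Pz z 1) = WW z 0.
  rewrite /WW; move: (Pz z 0) (Pz z^-1 0) (Pz z 1) (Pz z^-1 1) => a b c d; ring.
by rewrite /WW W divff.
Qed.

Lemma RRrec z m : z != 0 -> 0 < q < 1 -> `|al| < 1 -> zok q z -> zok q z^-1 ->
  (1 - A * Q ^+ m) * (RR z m.+2 + RR z m) = (1 - B * Q ^+ m) * (z + z^-1) * RR z m.+1.
Proof.
move=> z0 hq hal hz hz'.
have S1 := sol m z0 hq hal hz.
have z0' : z^-1 != 0 by rewrite invr_eq0.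
have S2 := sol m z0' hq hal hz'.
rewrite invrK in S2.
apply/eqP; rewrite -subr_eq0; apply/eqP.
transitivity ((z^-1 - z)^-1 * (Pz z 0 * ((1 - A * Q ^+ m) * (z^-1 ^+ m.+2 * Pz z^-1 m.+2 + z^-1 ^+ m * Pz z^-1 m) -
   (1 - B * Q ^+ m) * (z^-1 + z) * (z^-1 ^+ m.+1 * Pz z^-1 m.+1))
  - Pz z^-1 0 * ((1 - A * Q ^+ m) * (z ^+ m.+2 * Pz z m.+2 + z ^+ m * Pz z m) -
   (1 - B * Q ^+ m) * (z + z^-1) * (z ^+ m.+1 * Pz z m.+1)))).
  rewrite /RR; move: (Pz z 0) (Pz z^-1 0) (Pz z m) (Pz z m.+1) (Pz z m.+2)
    (Pz z^-1 m) (Pz z^-1 m.+1) (Pz z^-1 m.+2) => a b c d e f g h; ring.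
by rewrite S1 S2 !subrr; ring.
Qed.

End Main.

Section Main2.
Variable R : realType.
Local Notation C := R[i].
Local Notation nc := (@ComplexField.Normc.normc R).
Variables (q al be : R).
Local Notation Q := (q%:C).
Local Notation A := (al%:C).
Local Notation B := (be%:C).

Definition rho (j : int) : C := qpochZ A Q j / qpochZ B Q j.

Lemma rho0 : rho 0 = 1.
Proof. by rewrite /rho /= /qpoch !big_ord0 divr1. Qed.

Lemma rhoS (k : nat) : rho k.+1 = rho k * gamt A B Q k.
Proof.
rewrite /rho /= /qpoch !big_ord_recr /= /gamt /=.
move: (\prod_(i < k) _) (\prod_(i < k) _) => a b.
have E : Q ^ (k%:Z) = Q ^+ k by [].
rewrite !invfM !E; ring.
Qed.

Lemma b_neq0 m : 0 <= q <= 1 -> be < 1 -> 1 - B * Q ^+ m != 0.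
Proof.
move=> /andP[q0 q1] hb.
have e : (1 - be * q ^+ m)%:C = 1 - B * Q ^+ m :> C.
  by rewrite rmorphB rmorph1 rmorphM rmorphXn.
rewrite -e eq_complex /= eqxx andbT subr_eq0 eq_sym.
have t1 : q ^+ m <= 1 by rewrite exprn_ile1.
have t0 : 0 <= q ^+ m by rewrite exprn_ge0.
rewrite lt_eqF //.
case: (lerP be 0) => hb0; first by nra.
have := ler_wpM2l (ltW hb0) t1. nra.
Qed.

Lemma gR z k : z != 0 -> 0 < q < 1 -> `|al| < 1 -> be < 1 -> zok q z -> zok q z^-1 ->
  (z + z^-1) * RR q al be z k.+1 - gamt A B Q k * RR q al be z k =
  gamt A B Q k * RR q al be z k.+2.
Proof.
move=> z0 hq hal hbe hz hz'.
have hq1 : 0 <= q <= 1 by case/andP: hq => q0 q1; rewrite !ltW.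
have hb := b_neq0 k hq1 hbe.
have rec := @RRrec R q al be z k z0 hq hal hz hz'.
rewrite /gamt /=.
have E : Q ^ (k%:Z) = Q ^+ k by [].
rewrite !E.
move: rec hb; move: (RR q al be z k) (RR q al be z k.+1) (RR q al be z k.+2) => r0 r1 r2.
move=> rec hb.
apply: (mulfI hb).
transitivity ((1 - B * Q ^+ k) * (z + z^-1) * r1 - (1 - A * Q ^+ k) * r0).
  by field; rewrite ?z0 ?hb.
rewrite -rec.
by field; rewrite ?z0 ?hb.
Qed.


Lemma pP_eq z k : z != 0 -> 0 < q < 1 -> `|al| < 1 -> be < 1 -> zok q z -> zok q z^-1 ->
  z^-1 - z != 0 ->
  pP A B Q (z + z^-1) k = (rho (k%:Z - 1) * RR q al be z k, rho k * RR q al be z k.+1).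
Proof.
move=> z0 hq hal hbe hz hz' hzz.
elim: k => [|k IH].
  by rewrite /= RR0 (@RR1 R q al be z z0 hq hal hz hz' hzz) rho0 mulr0 mulr1.
rewrite /= IH /=.
have e : (k.+1%:Z - 1 = k%:Z)%R by rewrite -addn1 PoszD addrK.
rewrite e.
have key : gamt A B Q (k%:Z - 1) * (rho (k%:Z - 1) * RR q al be z k) =
           rho k * RR q al be z k.
  case: k {IH e} => [|j]; first by rewrite RR0 !mulr0.
  have e' : (j.+1%:Z - 1 = j%:Z)%R by rewrite -addn1 PoszD addrK.
  rewrite e' rhoS.
  move: (gamt A B Q j) (rho j) (RR q al be z j.+1) => a b c; ring.
have g := @gR z k z0 hq hal hbe hz hz'.
congr pair.
transitivity (rho k * ((z + z^-1) * RR q al be z k.+1 - gamt A B Q k * RR q al be z k)).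
  transitivity ((z + z^-1) * (rho k * RR q al be z k.+1) - gamt A B Q k *
     (gamt A B Q (k%:Z - 1) * (rho (k%:Z - 1) * RR q al be z k))).
    move: (gamt A B Q (k%:Z - 1)) (rho (k%:Z - 1)) (RR q al be z k) (gamt A B Q k)
      (rho k) (RR q al be z k.+1) => a b c d f h; ring.
  rewrite key.
  move: (RR q al be z k) (gamt A B Q k) (rho k) (RR q al be z k.+1) => a b c d; ring.
rewrite g rhoS.
move: (gamt A B Q k) (rho k) (RR q al be z k.+2) => a b c; ring.
Qed.

Lemma part1 z n : z != 0 -> 0 < q < 1 -> `|al| < 1 -> be < 1 -> zok q z -> zok q z^-1 ->
  z^-1 - z != 0 -> -1 <= n ->
  pAB A B Q n (z + z^-1) = rhs25 A B Q n z.
Proof.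
move=> z0 hq hal hbe hz hz' hzz.
case: n => [k|[|k]] hn //.
- rewrite /pAB (@pP_eq z k z0 hq hal hbe hz hz' hzz) /= /rhs25.
  have e : (k%:Z + 1 = k.+1%:Z)%R by rewrite -addn1 PoszD.
  rewrite e -exprz_inv.
  have e1 : Q ^ (k.+1%:Z) = Q ^+ k.+1 by [].
  have e2 : z^-1 ^ (k.+1%:Z) = z^-1 ^+ k.+1 by [].
  have e3 : z ^ (k.+1%:Z) = z ^+ k.+1 by [].
  rewrite e1 e2 e3.
  have p0 : forall w, phitau A B Q w 1 = Pz q al be w 0 by move=> w; rewrite /Pz expr0.
  rewrite !p0 /RR /rho /=.
  rewrite -/(Pz q al be z k.+1) -/(Pz q al be z^-1 k.+1).
  move: (Pz q al be z 0) (Pz q al be z^-1 0) (Pz q al be z k.+1) (Pz q al be z^-1 k.+1)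
    (qpoch A Q k) (qpoch B Q k) (z^-1 ^+ k.+1) (z ^+ k.+1) => a b c d f g h i.
  ring.
- rewrite /pAB /rhs25.
  have e : (Negz 0 + 1 = 0 :> int)%R by [].
  rewrite e oppr0 !expr0z.
  move: (phitau A B Q z 1) (phitau A B Q z^-1 1) => a b.
  by rewrite !mul1r [a * b]mulrC subrr mulr0.
Qed.

End Main2.

Section Cont.
Variable R : realType.
Local Notation C := R[i].
Local Notation nc := (@ComplexField.Normc.normc R).
Variables (a b c : C).

Lemma idz (z : C) : (fun w => w) @ z^' --> z.
Proof. exact: (@nbhs_dnbhs _ z). Qed.

Lemma gz (z : C) : z != 0 -> (fun w => w + w^-1) @ z^' --> z + z^-1.
Proof.
move=> z0.
have h1 := @idz z.
have h2 := @cvgV _ _ _ (@dnbhs_filter _ z) _ _ z0 h1.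
exact: (@cvgD _ _ _ _ (@dnbhs_filter _ z) (fun w => w) (fun w => w^-1) _ _ h1 h2).
Qed.

Lemma pP_cont (z x0 : C) (g : C -> C) : g @ z^' --> x0 ->
  forall k, (fun w => (pP a b c (g w) k).1) @ z^' --> (pP a b c x0 k).1 /\
            (fun w => (pP a b c (g w) k).2) @ z^' --> (pP a b c x0 k).2.
Proof.
move=> hg; elim=> [|k [h1 h2]].
  by split; apply: cvg_cst.
split; first exact: h2.
have e1 := @cvgM _ _ _ (@dnbhs_filter _ z) g (fun w => (pP a b c (g w) k).2) _ _ hg h2.
have e2 := @cvgM _ _ _ (@dnbhs_filter _ z) (fun=> gamt a b c (k%:Z - 1) * gamt a b c k)
   (fun w => (pP a b c (g w) k).1) _ _ (@cvg_cst _ (gamt a b c (k%:Z - 1) * gamt a b c k) _ _ (@dnbhs_filter _ z)) h1.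
have e3 := @cvgB _ _ _ _ (@dnbhs_filter _ z) _ _ _ _ e1 e2.
change ((fun w => g w * (pP a b c (g w) k).2 - gamt a b c (k%:Z - 1) * gamt a b c k *
   (pP a b c (g w) k).1) @ z^' --> x0 * (pP a b c x0 k).2 - gamt a b c (k%:Z - 1) *
   gamt a b c k * (pP a b c x0 k).1).
exact: e3.
Qed.

Lemma pAB_cont (z : C) n : z != 0 ->
  (fun w => pAB a b c n (w + w^-1)) @ z^' --> pAB a b c n (z + z^-1).
Proof.
move=> z0; case: n => [k|k].
  change ((fun w => (pP a b c (w + w^-1) k).2) @ z^' --> (pP a b c (z + z^-1) k).2).
  exact: (pP_cont (gz z0) k).2.
exact: (@cvg_cst _ 0 _ _ (@dnbhs_filter _ z)).
Qed.

End Cont.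

Section Lat.
Variable R : realType.
Local Notation C := R[i].
Local Notation nc := (@ComplexField.Normc.normc R).

Lemma QzE (q : R) (m : int) : (q%:C) ^ m = (q ^ m)%:C :> C.
Proof.
case: m => k /=; first by rewrite rmorphXn.
by rewrite fmorphV rmorphXn.
Qed.

Lemma qz_sep (q : R) (j : int) : 0 < q < 1 -> j != 0 -> q ^ j <= q \/ q^-1 <= q ^ j.
Proof.
move=> /andP[q0 q1]; case: j => [[//|k] _|k _].
  left; have -> : q ^ (k.+1%:Z) = q ^+ k.+1 by [].
  have h : q ^+ k <= 1 by rewrite exprn_ile1 // ltW.
  rewrite exprS; nra.
right; have -> : q ^ (Negz k) = (q ^+ k.+1)^-1 by [].
rewrite lef_pV2 ?posrE ?exprn_gt0 //.
have h : q ^+ k <= 1 by rewrite exprn_ile1 // ltW.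
rewrite exprS; nra.
Qed.

Lemma qz_gap (q : R) (m m0 : int) : 0 < q < 1 -> q ^ m != q ^ m0 ->
  q ^ m0 * (1 - q) <= `|q ^ m - q ^ m0|.
Proof.
move=> hq hne.
have /andP[q0 q1] := hq.
have qn0 : q != 0 by rewrite gt_eqF.
have e : q ^ m = q ^ m0 * q ^ (m - m0) by rewrite -expfzDr // addrC subrK.
have jn0 : m - m0 != 0.
  by apply: contraNneq hne => h; rewrite e h expr0z mulr1.
have t0 : 0 < q ^ m0 by rewrite exprz_gt0.
rewrite e.
have -> : q ^ m0 * q ^ (m - m0) - q ^ m0 = q ^ m0 * (q ^ (m - m0) - 1) by ring.
rewrite normrM (gtr0_norm t0).
rewrite ler_pM2l //.
have qi : 1 - q <= q^-1 - 1.
  have : q^-1 + q >= 2.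
    have h : 0 <= (1 - q) ^+ 2 by rewrite sqr_ge0.
    have hq' : q^-1 * q = 1 by rewrite mulVf.
    have hqi : 0 < q^-1 by rewrite invr_gt0.
    nra.
  lra.
case: (qz_sep hq jn0) => h.
  rewrite ler0_norm; last by rewrite subr_le0 (le_trans h) // ltW.
  lra.
rewrite ger0_norm; last by rewrite subr_ge0; apply: le_trans h; lra.
lra.
Qed.


Lemma Q_neq0 (q : R) : 0 < q -> (q%:C : C) != 0.
Proof. by move=> q0; rewrite eq_complex /= eqxx andbT gt_eqF. Qed.

Lemma nl_facts (q : R) (z : C) : 0 < q < 1 -> z != 0 -> ~ qhalf_lattice q%:C z ->
  [/\ zok q z, zok q z^-1 & z^-1 - z != 0].
Proof.
move=> hq z0 nl.
have /andP[q0 q1] := hq.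
have Q0 := Q_neq0 q0.
split.
- move=> k; apply/negP => /eqP h; apply: nl; exists (Negz k).
  have hQ : (q%:C : C) ^+ k.+1 != 0 by rewrite expf_neq0.
  have -> : (q%:C : C) ^ (Negz k) = ((q%:C) ^+ k.+1)^-1 by [].
  apply: (mulIf hQ); rewrite mulVf // (exprS (q%:C) k).
  apply/eqP; rewrite eq_sym -subr_eq0 -h; apply/eqP; ring.
- move=> k; apply/negP => /eqP h; apply: nl; exists (k.+1%:Z).
  have -> : (q%:C : C) ^ (k.+1%:Z) = (q%:C) ^+ k.+1 by [].
  apply/eqP; rewrite -subr_eq0; apply/eqP.
  transitivity (z ^+ 2 * (1 - q%:C * z^-1 ^+ 2 * q%:C ^+ k)); last by rewrite h mulr0.
  by rewrite (exprS (q%:C) k); field.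
- apply/negP => /eqP h; apply: nl; exists 0.
  have e : z = z^-1 by apply/eqP; rewrite eq_sym -subr_eq0 h.
  by rewrite expr0z expr2 {1}e mulVf.
Qed.

Lemma near_nl (q : R) (z : C) : 0 < q < 1 -> z != 0 -> qhalf_lattice q%:C z ->
  \forall w \near z^', w != 0 /\ ~ qhalf_lattice q%:C w.
Proof.
move=> hq z0 [m0 hz2].
have /andP[q0 q1] := hq.
set nz := nc z.
have nz0 : 0 < nz by rewrite lt_def nc_eq0 z0 nc_ge0.
set del := nz * (1 - q) / 3.
have del0 : 0 < del by rewrite /del divr_gt0 // mulr_gt0 // subr_gt0.
have del0' : (0 : C) < del%:C by rewrite ltcR.
have h1 := (cvgrPdist_lt _ _).1 (@idz R z) _ del0'.
have h2 := nbhs_dnbhs_neq z.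
near=> w.
have d1 : `|z - w| < del%:C by near: w; exact: h1.
have d2 : w != z by near: w; exact: h2.
rewrite ncE ltcR in d1.
have w0 : w != 0.
  apply: contraTneq d1 => ->; rewrite subr0 -/nz /del -leNgt; nra.
split => // -[m hw2].
rewrite !QzE in hz2 hw2.
have t0 : 0 < q ^ m0 by rewrite exprz_gt0.
have nzz : nz ^+ 2 = q ^ m0 by rewrite /nz -ncX hz2 ncR gtr0_norm.
have hdiff : w ^+ 2 - z ^+ 2 = (w - z) * (w + z) by ring.
have nwz : nc (w - z) < del by rewrite -ncN opprB.
have nwz2 : nc (w + z) <= del + 2 * nz.
  have -> : w + z = (w - z) + z * 2 by ring.
  apply: le_trans (ncD _ _) _; rewrite ncM (_ : nc 2 = 2).
    rewrite -/nz; lra.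
  by rewrite (_ : (2 : C) = (2 : R)%:C) ?ncR ?ger0_norm // rmorphMn rmorph1.
have nwz0 := nc_ge0 (w - z).
have nwz20 := nc_ge0 (w + z).
case: (eqVneq (q ^ m) (q ^ m0)) => hmm.
  have : w + z = 0.
    have : (w - z) * (w + z) = 0 by rewrite -hdiff hw2 hz2 hmm subrr.
    by move/eqP; rewrite mulf_eq0 subr_eq0 (negPf d2) /= => /eqP.
  move=> wz; have : w = - z by apply/eqP; rewrite -subr_eq0 opprK wz.
  move=> e; move: nwz; rewrite e (_ : - z - z = z * (-2)); last by ring.
  rewrite ncM (_ : nc (-2) = 2).
    rewrite -/nz /del; nra.
  by rewrite ncN (_ : (2 : C) = (2 : R)%:C) ?ncR ?ger0_norm // rmorphMn rmorph1.
have gap := qz_gap hq hmm.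
have : `|q ^ m - q ^ m0| = nc (w - z) * nc (w + z).
  by rewrite -ncM -hdiff hw2 hz2 -rmorphB ncR.
move=> e; rewrite e -nzz in gap.
have hh : nc (w - z) * nc (w + z) <= del * (del + 2 * nz).
  apply: le_trans (ler_wpM2l nwz0 nwz2) _.
  by apply: ler_wpM2r; [lra | exact: ltW].
have hh2 : del * (del + 2 * nz) < nz ^+ 2 * (1 - q).
  have dl : del < nz by rewrite /del; have := mulr_gt0 nz0 q0; nra.
  have e3 : del * (3 * nz) = nz ^+ 2 * (1 - q) by rewrite /del; field.
  have dl' : 0 < nz - del by rewrite subr_gt0.
  rewrite -e3; have := mulr_gt0 del0 dl'; nra.
lra.
Unshelve. all: by end_near.
Qed.

End Lat.

Unset Implicit Arguments.

Theorem proposition2p5 (R : realType) (q al be : R) (z : R[i]) (n : int) :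
  0 < q < 1 -> -1 < al < 1 -> be < 1 -> z != 0 -> -1 <= n ->
  (~ qhalf_lattice q%:C z ->
     pAB al%:C be%:C q%:C n (z + z^-1) = rhs25 al%:C be%:C q%:C n z) /\
  (qhalf_lattice q%:C z ->
     rhs25 al%:C be%:C q%:C n w @[w --> z^'] --> pAB al%:C be%:C q%:C n (z + z^-1)).
Proof.
move=> hq /andP[a1 a2] hbe z0 hn.
have hal : `|al| < 1 by rewrite ltr_norml a1 a2.
split.
  move=> nl; have [hz hz' hzz] := nl_facts hq z0 nl.
  exact: (@part1 R q al be z n z0 hq hal hbe hz hz' hzz hn).
move=> lat.
have hc := @pAB_cont R al%:C be%:C q%:C z n z0.
apply: (cvg_trans _ hc).
apply: near_eq_cvg.
apply: filterS (near_nl hq z0 lat) => w [w0 nlw].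
have [hw hw' hww] := nl_facts hq w0 nlw.
by rewrite (@part1 R q al be w n w0 hq hal hbe hw hw' hww hn).
Qed.
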